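(* Let $c,R>0$ and let $\Omega\subset\mathbb H^n$ be an open convex set with $B_H(0,cR)\subset\Omega$. Let $u:\overline\Omega\to\mathbb R$ be an $H$-convex function with $u\le0$ in $\Omega$. Let $\xi_1,\xi_2\in B_H(0,cR)$ with $\xi_2\in H_{\xi_1}$, and let $c_1,c_2\ge0$, $c_3>0$ be constants such that $N(\xi_1)\le c_1R$, $N(\xi_2)\le c_2R$, $d_H(\xi_1,\xi_2)\le c_3R$, $c_1+c_3<c$ and $c_2+c_3<c$. Then $$\frac{c-c_1-c_3}{c-c_1}\,u(\xi_1)\ge u(\xi_2)\ge\frac{c-c_2}{c-c_2-c_3}\,u(\xi_1).$$
   Context: $\mathbb H^n=\mathbb C^n\times\mathbb R\cong\mathbb R^{2n+1}$ with real coordinates $(x,y,t)$, $z=x+iy$, group law $(z,t)\circ(z',t')=(z+z',t+t'+2\,\mathrm{Im}\langle z,z'\rangle)$, $\langle z,z'\rangle=\sum_j z_j\overline{z'_j}$. Dilations $\delta_\lambda(z,t)=(\lambda z,\lambda^2t)$. Horizontal plane at $\xi_0=(x_0,y_0,t_0)$: $H_{\xi_0}=\{(x,y,t):t=t_0+2(x\cdot y_0-x_0\cdot y)\}$. Gauge $N(z,t)=(|z|^4+t^2)^{1/4}$, $d_H(\xi,\zeta)=N(\zeta^{-1}\circ\xi)$, $B_H(\xi,r)=\{\zeta:d_H(\zeta,\xi)<r\}$. A function $u$ on an $H$-convex set $\tilde\Omega$ is $H$-convex if $u(\xi_1\circ\delta_\lambda(\xi_1^{-1}\circ\xi_2))\le(1-\lambda)u(\xi_1)+\lambda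 u(\xi_2)$ for all $\xi_1,\xi_2\in\tilde\Omega$ with $\xi_1\in H_{\xi_2}$, $\lambda\in[0,1]$. *)

(* Defs.v *)
From HB Require Import structures.
From mathcomp Require Import all_boot all_order all_algebra.
From mathcomp Require Import all_classical all_reals all_analysis.
Set Implicit Arguments. Unset Strict Implicit. Unset Printing Implicit Defensive.
Import Order.TTheory GRing.Theory Num.Theory.
Local Open Scope ring_scope.
Import numFieldNormedType.Exports.
Local Open Scope classical_set_scope.

(* H^n = C^n x R = R^n x R^n x R, coordinates ((x, y), t), z = x + i y. *)
Notation heis n R := ('rV[R]_n * 'rV[R]_n * R)%type.

Section Heis.
Variables (n : nat) (R : realType).
Implicit Types (p q : heis n R).

Definition hx p : 'rV[R]_n := p.1.1.
Definition hy p : 'rV[R]_n := p.1.2.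
Definition ht p : R := p.2.

Definition dotr (a b : 'rV[R]_n) : R := \sum_(j < n) a 0 j * b 0 j.

Definition horigin : heis n R := (0, 0, 0).

(* Im <z, z'> = sum_j (y_j x'_j - x_j y'_j) *)
Definition hmul p q : heis n R :=
  (hx p + hx q, hy p + hy q,
   ht p + ht q + 2 * (dotr (hy p) (hx q) - dotr (hx p) (hy q))).

Definition hinv p : heis n R := (- hx p, - hy p, - ht p).

Definition hdil (l : R) p : heis n R := (l *: hx p, l *: hy p, l ^+ 2 * ht p).

Definition gauge p : R :=
  Num.sqrt (Num.sqrt ((dotr (hx p) (hx p) + dotr (hy p) (hy p)) ^+ 2 + ht p ^+ 2)).

Definition dH p q : R := gauge (hmul (hinv q) p).

Definition ballH p (r : R) : set (heis n R) := [set q | dH q p < r].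

Definition horiz (p0 : heis n R) : set (heis n R) :=
  [set p | ht p = ht p0 + 2 * (dotr (hx p) (hy p0) - dotr (hx p0) (hy p))].

Definition eucl_convex (D : set (heis n R)) : Prop :=
  forall p q, D p -> D q -> forall s : R, 0 <= s <= 1 ->
    D ((1 - s) *: hx p + s *: hx q, (1 - s) *: hy p + s *: hy q,
       (1 - s) * ht p + s * ht q).

Definition Hconvex_fun (D : set (heis n R)) (u : heis n R -> R) : Prop :=
  forall p1 p2, D p1 -> D p2 -> horiz p2 p1 -> forall l : R, 0 <= l <= 1 ->
    u (hmul p1 (hdil l (hmul (hinv p1) p2))) <= (1 - l) * u p1 + l * u p2.

End Heis.

(* Main.v *)
Require Import Defs.
From HB Require Import structures.
From mathcomp Require Import all_boot all_order all_algebra.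
From mathcomp Require Import all_classical all_reals all_analysis.
From mathcomp Require Import lra ring.
Import Order.TTheory GRing.Theory Num.Theory.
Local Open Scope ring_scope.
Import numFieldNormedType.Exports.
Local Open Scope classical_set_scope.
Set Implicit Arguments. Unset Strict Implicit.

Section H.
Variables (n : nat) (R : realType).
Implicit Types (p q v w : heis n R) (a b x y : 'rV[R]_n).

Lemma dotrC a b : dotr a b = dotr b a.
Proof. by apply: eq_bigr => j _; rewrite mulrC. Qed.
Lemma dotrDl a b x : dotr (a + b) x = dotr a x + dotr b x.
Proof. by rewrite /dotr -big_split; apply: eq_bigr => j _; rewrite !mxE mulrDl. Qed.
Lemma dotrDr a b x : dotr x (a + b) = dotr x a + dotr x b.
Proof. by rewrite dotrC dotrDl !(dotrC x). Qed.
Lemma dotrNl a b : dotr (- a) b = - dotr a b.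
Proof. by rewrite /dotr -sumrN; apply: eq_bigr => j _; rewrite !mxE mulNr. Qed.
Lemma dotrNr a b : dotr b (- a) = - dotr b a.
Proof. by rewrite dotrC dotrNl dotrC. Qed.
Lemma dotrZl (k : R) a b : dotr (k *: a) b = k * dotr a b.
Proof. by rewrite /dotr mulr_sumr; apply: eq_bigr => j _; rewrite !mxE mulrA. Qed.
Lemma dotrZr (k : R) a b : dotr b (k *: a) = k * dotr b a.
Proof. by rewrite dotrC dotrZl dotrC. Qed.
Lemma dotr0l a : dotr 0 a = 0.
Proof. by rewrite /dotr big1 // => j _; rewrite mxE mul0r. Qed.
Lemma dotr_ge0 a : 0 <= dotr a a.
Proof. by apply: sumr_ge0 => j _; rewrite -expr2 sqr_ge0. Qed.

Lemma hmulK p v : hmul (hinv p) (hmul p v) = v.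
Proof.
case: p v => [[x y] t] [[a b] s]; rewrite /hmul /hinv /hx /hy /ht /=.
congr (_, _, _); first by rewrite addKr.
  by rewrite addKr.
rewrite !dotrDr !dotrNl.
rewrite [dotr y x]dotrC; ring.
Qed.

Lemma hmulKV p v : hmul p (hmul (hinv p) v) = v.
Proof.
case: p v => [[x y] t] [[a b] s]; rewrite /hmul /hinv /hx /hy /ht /=.
congr (_, _, _); first by rewrite addNKr.
  by rewrite addNKr.
rewrite !dotrDr !dotrNl !dotrNr [dotr y x]dotrC; ring.
Qed.

Lemma hdilM (l m : R) v : hdil m (hdil l v) = hdil (m * l) v.
Proof.
case: v => [[x y] t]; rewrite /hdil /hx /hy /ht /=.
by rewrite !scalerA exprMn mulrA.
Qed.

Lemma hdil1 v : hdil 1 v = v.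
Proof. by case: v => [[x y] t]; rewrite /hdil /hx /hy /ht /= !scale1r expr1n mul1r. Qed.

Lemma hmul0 q : hmul (hinv (horigin n R)) q = q.
Proof.
case: q => [[a b] s]; rewrite /hmul /hinv /horigin /hx /hy /ht /= !oppr0 !add0r.
by rewrite !dotr0l subrr mulr0 addr0.
Qed.

Lemma htmul p v : ht (hmul p v) =
  ht p + 2 * (dotr (hx (hmul p v)) (hy p) - dotr (hx p) (hy (hmul p v))) + ht v.
Proof.
case: p v => [[x y] t] [[a b] s]; rewrite /hmul /hx /hy /ht /=.
rewrite !dotrDl !dotrDr [dotr a y]dotrC; ring.
Qed.

Lemma horizE p q : horiz p q <-> ht q = ht p + 2 * (dotr (hx q) (hy p) - dotr (hx p) (hy q)).
Proof. by []. Qed.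

Lemma horiz_mul p v : horiz p (hmul p v) <-> ht v = 0.
Proof.
rewrite horizE; have H := htmul p v; split => H1.
  move: H1; rewrite H; lra.
  rewrite H H1; lra.
Qed.

Lemma horiz_sym p q : horiz p q -> horiz q p.
Proof. rewrite !horizE => ->; rewrite [dotr (hx q) _]dotrC [dotr (hx p) _]dotrC; lra. Qed.

Lemma gaugeN v : gauge (hinv v) = gauge v.
Proof.
case: v => [[x y] t]; rewrite /gauge /hinv /hx /hy /ht /=.
by rewrite !dotrNl !dotrNr !opprK sqrrN.
Qed.

Lemma hinv_mul p q : hinv (hmul (hinv q) p) = hmul (hinv p) q.
Proof.
case: p q => [[x y] t] [[a b] s]; rewrite /hmul /hinv /hx /hy /ht /=.
congr (_, _, _); try by rewrite opprD opprK addrC.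
rewrite !dotrNl [dotr a y]dotrC [dotr b x]dotrC; ring.
Qed.

Lemma dH_sym p q : dH p q = dH q p.
Proof. by rewrite /dH -gaugeN hinv_mul. Qed.

End H.

Section H2.
Variables (n : nat) (R : realType).
Implicit Types (p q v w : heis n R) (a b x y : 'rV[R]_n).

Lemma quad x y a b (k m : R) :
  0 <= (dotr x x + dotr y y) - 2 * k * (dotr x a + dotr y b) - 2 * m * (dotr y a - dotr x b)
      + (k ^+ 2 + m ^+ 2) * (dotr a a + dotr b b).
Proof.
have h := addr_ge0 (dotr_ge0 (x - k *: a + m *: b)) (dotr_ge0 (y - k *: b - m *: a)).
move: h; rewrite !(dotrDl, dotrDr, dotrNl, dotrNr, dotrZl, dotrZr).
rewrite [dotr a x]dotrC [dotr b x]dotrC [dotr b a]dotrC [dotr b y]dotrC [dotr a y]dotrC.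
move=> h; apply: (le_trans h); rewrite le_eqVlt; apply/orP; left; apply/eqP; ring.
Qed.


Lemma cs x y a b :
  (dotr x a + dotr y b) ^+ 2 + (dotr y a - dotr x b) ^+ 2 <=
  (dotr x x + dotr y y) * (dotr a a + dotr b b).
Proof.
set S := dotr x x + dotr y y; set s2 := dotr a a + dotr b b.
set P := dotr x a + dotr y b; set Q := dotr y a - dotr x b.
set K := P ^+ 2 + Q ^+ 2.
have hq t : 0 <= S - 2 * t * K + t ^+ 2 * K * s2.
  have := quad x y a b (t * P) (t * Q); rewrite -/S -/s2 -/P -/Q.
  by have -> : S - 2 * t * K + t ^+ 2 * K * s2 =
    S - 2 * (t * P) * P - 2 * (t * Q) * Q + ((t * P) ^+ 2 + (t * Q) ^+ 2) * s2
    by rewrite /K; ring.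
have hs : 0 <= s2 by apply: addr_ge0; apply: dotr_ge0.
have hK : 0 <= K by rewrite /K addr_ge0 // sqr_ge0.
have [s0|s0] := eqVneq s2 0.
  rewrite s0 mulr0; rewrite leNgt; apply/negP => Kpos.
  have := hq ((S + 1) / (2 * K)); rewrite s0 mulr0 addr0.
  have -> : 2 * ((S + 1) / (2 * K)) * K = S + 1.
    by field; rewrite gt_eqF.
  lra.
have sp : 0 < s2 by rewrite lt_neqAle hs andbT eq_sym.
have := mulr_ge0 (hq (1 / s2)) hs.
have -> : (S - 2 * (1 / s2) * K + (1 / s2) ^+ 2 * K * s2) * s2 = S * s2 - K by field.
lra.
Qed.

Lemma tri2 (a b c d : R) :
  Num.sqrt ((a + b) ^+ 2 + (c + d) ^+ 2) <=
  Num.sqrt (a ^+ 2 + c ^+ 2) + Num.sqrt (b ^+ 2 + d ^+ 2).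
Proof.
set A := Num.sqrt (a ^+ 2 + c ^+ 2); set B := Num.sqrt (b ^+ 2 + d ^+ 2).
have A0 : 0 <= A := sqrtr_ge0 _.
have B0 : 0 <= B := sqrtr_ge0 _.
have A2 : A ^+ 2 = a ^+ 2 + c ^+ 2 by rewrite sqr_sqrtr // addr_ge0 // sqr_ge0.
have B2 : B ^+ 2 = b ^+ 2 + d ^+ 2 by rewrite sqr_sqrtr // addr_ge0 // sqr_ge0.
have AB : a * b + c * d <= A * B.
  have h1 : (a * b + c * d) ^+ 2 <= (A * B) ^+ 2.
    rewrite exprMn A2 B2 -subr_ge0.
    have -> : (a ^+ 2 + c ^+ 2) * (b ^+ 2 + d ^+ 2) - (a * b + c * d) ^+ 2 = (a * d - b * c) ^+ 2 by ring.
    exact: sqr_ge0.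
  have h2 : 0 <= A * B by rewrite mulr_ge0.
  nra.
rewrite -(ger0_norm (addr_ge0 A0 B0)) -sqrtr_sqr ler_sqrt; last by rewrite sqr_ge0.
nra.
Qed.
End H2.

Section H3.
Variables (n : nat) (R : realType).
Implicit Types (p q v w : heis n R) (a b x y : 'rV[R]_n).

Lemma cs2 (a b c d : R) :
  a * b + c * d <= Num.sqrt (a ^+ 2 + c ^+ 2) * Num.sqrt (b ^+ 2 + d ^+ 2).
Proof.
set A := Num.sqrt (a ^+ 2 + c ^+ 2); set B := Num.sqrt (b ^+ 2 + d ^+ 2).
have A0 : 0 <= A := sqrtr_ge0 _.
have B0 : 0 <= B := sqrtr_ge0 _.
have A2 : A ^+ 2 = a ^+ 2 + c ^+ 2 by rewrite sqr_sqrtr // addr_ge0 // sqr_ge0.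
have B2 : B ^+ 2 = b ^+ 2 + d ^+ 2 by rewrite sqr_sqrtr // addr_ge0 // sqr_ge0.
have h1 : (a * b + c * d) ^+ 2 <= (A * B) ^+ 2.
  rewrite exprMn A2 B2 -subr_ge0.
  have -> : (a ^+ 2 + c ^+ 2) * (b ^+ 2 + d ^+ 2) - (a * b + c * d) ^+ 2 = (a * d - b * c) ^+ 2 by ring.
  exact: sqr_ge0.
have h2 : 0 <= A * B by rewrite mulr_ge0.
nra.
Qed.

Lemma gauge_dil (l : R) w : 0 <= l -> gauge (hdil l w) = l * gauge w.
Proof.
move=> l0; case: w => [[x y] t]; rewrite /gauge /hdil /hx /hy /ht /=.
rewrite !(dotrZl, dotrZr).
set S := dotr x x + dotr y y.
have -> : (l * (l * dotr x x) + l * (l * dotr y y)) ^+ 2 + (l ^+ 2 * t) ^+ 2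
   = (l ^+ 2) ^+ 2 * (S ^+ 2 + t ^+ 2) by rewrite /S; ring.
rewrite sqrtrM ?sqr_ge0 // sqrtr_sqr ger0_norm ?sqr_ge0 //.
by rewrite sqrtrM ?sqr_ge0 // sqrtr_sqr ger0_norm.
Qed.

Lemma gauge_tri p v : ht v = 0 -> gauge (hmul p v) <= gauge p + gauge v.
Proof.
case: p v => [[x y] t] [[a b] s]; rewrite /gauge /hmul /hx /hy /ht /= => ->.
set S := dotr x x + dotr y y; set s2 := dotr a a + dotr b b.
set P := dotr x a + dotr y b; set Q := dotr y a - dotr x b.
have e1 : dotr (x + a) (x + a) + dotr (y + b) (y + b) = S + s2 + 2 * P.
  rewrite !(dotrDl, dotrDr) /S /s2 /P [dotr a x]dotrC [dotr b y]dotrC; ring.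
have e2 : t + 0 + 2 * (dotr y a - dotr x b) = t + 2 * Q by rewrite addr0.
rewrite e1 e2.
have s20 : 0 <= s2 by rewrite addr_ge0 // dotr_ge0.
have S0 : 0 <= S by rewrite addr_ge0 // dotr_ge0.
rewrite expr0n /= addr0 sqrtr_sqr ger0_norm //.
set M := Num.sqrt (S ^+ 2 + t ^+ 2).
set N := Num.sqrt M. set sg := Num.sqrt s2.
set K := Num.sqrt (P ^+ 2 + Q ^+ 2).
have M0 : 0 <= M := sqrtr_ge0 _.
have N0 : 0 <= N := sqrtr_ge0 _.
have sg0 : 0 <= sg := sqrtr_ge0 _.
have K0 : 0 <= K := sqrtr_ge0 _.
have M2 : M ^+ 2 = S ^+ 2 + t ^+ 2 by rewrite sqr_sqrtr // addr_ge0 // sqr_ge0.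
have N2 : N ^+ 2 = M by rewrite sqr_sqrtr.
have sg2 : sg ^+ 2 = s2 by rewrite sqr_sqrtr.
have K2 : K ^+ 2 = P ^+ 2 + Q ^+ 2 by rewrite sqr_sqrtr // addr_ge0 // sqr_ge0.
have SM : S <= M.
  have : Num.sqrt (S ^+ 2) <= M.
    by rewrite /M ler_sqrt ?addr_ge0 ?sqr_ge0 // lerDl sqr_ge0.
  by rewrite sqrtr_sqr ger0_norm.
have KW : K <= N * sg.
  apply: (@le_trans _ _ (Num.sqrt S * sg)).
    by rewrite /K /sg -sqrtrM // ler_sqrt ?mulr_ge0 // cs.
  by rewrite ler_wpM2r // ler_sqrt.
have f1 : K ^+ 2 <= M * s2.
  have := cs x y a b; rewrite -/S -/s2 -/P -/Q => h.
  by rewrite K2 (le_trans h) // ler_wpM2r.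
have f2 : S * s2 <= M * s2 by rewrite ler_wpM2r.
have f3 : S * P + t * Q <= M * (N * sg).
  have := cs2 S P t Q; rewrite -/M -/K => h.
  by rewrite (le_trans h) // ler_wpM2l.
have PK : P <= K.
  have := cs2 P 1 Q 0; rewrite expr1n expr0n /= addr0 sqrtr1 mulr1 mulr0 addr0 -/K.
  by rewrite mulr1.
have f4 : s2 * P <= s2 * (N * sg) by rewrite ler_wpM2l // (le_trans PK).
have B0 : 0 <= N + sg by rewrite addr_ge0.
rewrite -(ger0_norm B0) -sqrtr_sqr ler_sqrt ?sqr_ge0 //.
have B2 : (N + sg) ^+ 2 = M + s2 + 2 * (N * sg).
  by rewrite -N2 -sg2; ring.
have B20 : 0 <= (N + sg) ^+ 2 by rewrite sqr_ge0.
rewrite -(ger0_norm B20) -sqrtr_sqr ler_sqrt ?sqr_ge0 // B2.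
set W := N * sg.
have W2 : W ^+ 2 = M * s2 by rewrite /W exprMn N2 sg2.
have -> : (S + s2 + 2 * P) ^+ 2 + (t + 2 * Q) ^+ 2 =
  S ^+ 2 + t ^+ 2 + s2 ^+ 2 + 4 * K ^+ 2 + 2 * (S * s2) + 4 * (S * P + t * Q) + 4 * (s2 * P).
  by rewrite K2; ring.
have -> : (M + s2 + 2 * W) ^+ 2 =
  M ^+ 2 + s2 ^+ 2 + 4 * W ^+ 2 + 2 * (M * s2) + 4 * (M * W) + 4 * (s2 * W) by ring.
rewrite M2 W2.
rewrite /W; lra.
Qed.
End H3.

Section H4.
Variables (n : nat) (R : realType).
Implicit Types (p q v w : heis n R) (a b x y : 'rV[R]_n).

Lemma step (c r a c3 : R) (Omega : set (heis n R)) u p q (mu : R) :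
  0 < r -> 0 < c3 ->
  ballH (horigin n R) (c * r) `<=` Omega ->
  Hconvex_fun (closure Omega) u ->
  (forall p, Omega p -> u p <= 0) ->
  ballH (horigin n R) (c * r) p -> horiz p q ->
  gauge p <= a * r -> dH q p <= c3 * r -> a + c3 < c ->
  c3 / (c - a) < mu -> mu <= 1 ->
  u q <= (1 - mu) * u p.
Proof.
move=> r0 c30 sub hc neg pB hpq gp dqp ac mu0 mu1.
have ca : 0 < c - a by lra.
have c3mu : c3 < mu * (c - a) by rewrite -ltr_pdivrMr.
have mup : 0 < mu by apply: le_lt_trans mu0; rewrite divr_ge0 ?ltW.
set w := hmul (hinv p) q.
have hq : hmul p w = q by rewrite hmulKV.
have htw : ht w = 0 by apply/(horiz_mul p w); rewrite hq.
have gw : gauge w = dH q p by [].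
have gw0 : 0 <= gauge w by rewrite /gauge sqrtr_ge0.
set l := mu^-1.
have l0 : 0 <= l by rewrite invr_ge0 ltW.
set xi := hmul p (hdil l w).
have htd : ht (hdil l w) = 0.
  by have -> : ht (hdil l w) = l ^+ 2 * ht w by []; rewrite htw mulr0.
have gxi : gauge xi < c * r.
  apply: (le_lt_trans (gauge_tri p htd)); rewrite gauge_dil //.
  have h1 : l * gauge w <= l * (c3 * r) by rewrite ler_wpM2l // -gw.
  have h2 : l * (c3 * r) < (c - a) * r.
    by rewrite /l mulrA ltr_pM2r // mulrC ltr_pdivrMr // mulrC.
  lra.
have xiO : Omega xi.
  apply: sub; rewrite /ballH /dH /=. by rewrite hmul0.
have pO : Omega p by apply: sub.
have hxi : horiz xi p by apply: horiz_sym; apply/horiz_mul.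
have := hc p xi (subset_closure pO) (subset_closure xiO) hxi mu.
rewrite /xi hmulK hdilM /l mulfV ?gt_eqF // hdil1 hq => H.
have := neg _ xiO; have := neg _ pO.
have : 0 <= mu <= 1 by rewrite mu1 ltW.
move=> /H; nra.
Qed.

Lemma key (c r a c3 : R) (Omega : set (heis n R)) u p q :
  0 < r -> 0 < c3 ->
  ballH (horigin n R) (c * r) `<=` Omega ->
  Hconvex_fun (closure Omega) u ->
  (forall p, Omega p -> u p <= 0) ->
  ballH (horigin n R) (c * r) p -> horiz p q ->
  gauge p <= a * r -> dH q p <= c3 * r -> a + c3 < c ->
  u q <= (c - a - c3) / (c - a) * u p.
Proof.
move=> r0 c30 sub hc neg pB hpq gp dqp ac.
have ca : 0 < c - a by lra.
set mu0 := c3 / (c - a).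
have mu01 : mu0 < 1 by rewrite /mu0 ltr_pdivrMr // mul1r; lra.
have -> : (c - a - c3) / (c - a) = 1 - mu0 by rewrite /mu0; field; rewrite gt_eqF.
have U0 : u p <= 0 by apply: neg; apply: sub.
apply/ler_addgt0Pr => e e0.
set m := Num.min (1 - mu0) (e / (- u p + 1)).
have mpos : 0 < m by rewrite lt_min subr_gt0 mu01 /= divr_gt0 //; lra.
have m1 : m <= 1 - mu0 by rewrite ge_min lexx.
have m2 : m <= e / (- u p + 1) by rewrite ge_min lexx orbT.
have m3 : m * (- u p + 1) <= e by rewrite -ler_pdivlMr //; lra.
have h := @step c r a c3 Omega u p q (mu0 + m) r0 c30 sub hc neg pB hpq gp dqp ac.
have := h ltac:(rewrite -/mu0; lra) ltac:(lra).
nra.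
Qed.
End H4.

Theorem lemma6p6 (n : nat) (R : realType) (c r : R) (Omega : set (heis n R))
  (u : heis n R -> R) (xi1 xi2 : heis n R) (c1 c2 c3 : R) :
  0 < c -> 0 < r ->
  open Omega -> eucl_convex Omega ->
  ballH (horigin n R) (c * r) `<=` Omega ->
  Hconvex_fun (closure Omega) u ->
  (forall p, Omega p -> u p <= 0) ->
  ballH (horigin n R) (c * r) xi1 -> ballH (horigin n R) (c * r) xi2 ->
  horiz xi1 xi2 ->
  0 <= c1 -> 0 <= c2 -> 0 < c3 ->
  gauge xi1 <= c1 * r -> gauge xi2 <= c2 * r -> dH xi1 xi2 <= c3 * r ->
  c1 + c3 < c -> c2 + c3 < c ->
  (c - c1 - c3) / (c - c1) * u xi1 >= u xi2 /\
  u xi2 >= (c - c2) / (c - c2 - c3) * u xi1.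
Proof.
move=> c0 r0 _ _ sub hc neg b1 b2 h12 _ _ c30 g1 g2 d12 a1 a2.
split.
  apply: (key r0 c30 sub hc neg b1 h12 g1) => //.
  by rewrite dH_sym.
have h := key r0 c30 sub hc neg b2 (horiz_sym h12) g2 d12 a2.
have k0 : 0 < (c - c2 - c3) / (c - c2) by rewrite divr_gt0 //; lra.
have -> : (c - c2) / (c - c2 - c3) = ((c - c2 - c3) / (c - c2))^-1.
  by rewrite invf_div.
by rewrite mulrC ler_pdivrMr // mulrC.
Qed.
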